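(* Let $(\mathfrak D,d)$ be a finite metric space, $p\in(1,\infty)$, $\vartheta\in\mathcal P(\mathfrak D)$, and let $\{\mu_k\}_{k\in\mathbb{N}}$ be a countable dense subset of $(\mathcal P(\mathfrak D),W_p)$. For each $k$ let $(\varphi_k,\psi_k)$ be functions $\mathfrak D\to\mathbb{R}$ with $\psi_k=\varphi_k^c$, $\varphi_k=\psi_k^c$ and $W_p^p(\vartheta,\mu_k)=\int_{\mathfrak D}\varphi_k\,d\mu_k+\int_{\mathfrak D}\psi_k\,d\vartheta$. For finite $I\subset\mathbb{N}$ define $G_I(\mu):=\max_{k\in I}\big(\int\varphi_k\,d\mu+\int\psi_k\,d\vartheta\big)$ and $F(\mu):=W_p^p(\vartheta,\mu)$ for $\mu\in\mathcal P(\mathfrak D)$. Then for every $\varepsilon>0$ there exists a finite $I_\varepsilon\subset\mathbb{N}$ with \[\sup_{\mu\in\mathcal P(\mathfrak D)}|F(\mu)-G_{I_\varepsilon}(\mu)|\le\varepsilon.\]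
   Context: $\mathcal P(\mathfrak D)$ is the set of probability measures on $\mathfrak D$, $W_p$ the $p$-Wasserstein distance with cost $d(x,y)^p$. The $c$-transform is $\varphi^c(x):=\inf_{y\in\mathfrak D}\big(d(x,y)^p-\varphi(y)\big)$. *)

(* Defs.v *)
From HB Require Import structures.
From mathcomp Require Import all_boot all_order all_algebra.
From mathcomp Require Import all_classical all_reals all_analysis.
Set Implicit Arguments. Unset Strict Implicit. Unset Printing Implicit Defensive.
Import Order.TTheory GRing.Theory Num.Theory.
Local Open Scope classical_set_scope.
Local Open Scope ring_scope.

Section Defs.
Variables (R : realType) (D : finType).

Definition is_metric (d : D -> D -> R) : Prop :=
  [/\ forall x y, 0 <= d x y,
      forall x y, d x y = 0 <-> x = y,
      forall x y, d x y = d y x &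
      forall x y z, d x z <= d x y + d y z].

Definition is_prob (mu : {ffun D -> R}) : Prop :=
  (forall x, 0 <= mu x) /\ \sum_x mu x = 1.

Definition integ (f : D -> R) (mu : {ffun D -> R}) : R := \sum_x f x * mu x.

Definition coupling (mu nu : {ffun D -> R}) (pi : {ffun D * D -> R}) : Prop :=
  [/\ forall z, 0 <= pi z,
      forall x, \sum_y pi (x, y) = mu x &
      forall y, \sum_x pi (x, y) = nu y].

Definition Wpp (d : D -> D -> R) (p : R) (mu nu : {ffun D -> R}) : R :=
  inf [set (\sum_z (d z.1 z.2 `^ p) * pi z) | pi in coupling mu nu].

Definition Wp (d : D -> D -> R) (p : R) (mu nu : {ffun D -> R}) : R :=
  (Wpp d p mu nu) `^ (p^-1).

Definition ctrans (d : D -> D -> R) (p : R) (phi : D -> R) : D -> R :=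
  fun x => inf [set (d x y `^ p - phi y) | y in [set: D]].

(* G_I(mu) = max_{k in I} (int phi_k dmu + int psi_k dtheta), for nonempty I *)
Definition GI (phi psi : nat -> D -> R) (theta : {ffun D -> R})
  (I : seq nat) (mu : {ffun D -> R}) : R :=
  let v k := integ (phi k) mu + integ (psi k) theta in
  \big[Num.max/v (head 0%N I)]_(k <- I) v k.

End Defs.

(* Main.v *)
Require Import Defs.
From HB Require Import structures.
From mathcomp Require Import all_boot all_order all_algebra.
From mathcomp Require Import all_classical all_reals all_analysis.
From mathcomp Require Import lra.
Import Order.TTheory GRing.Theory Num.Theory.
Local Open Scope classical_set_scope.
Local Open Scope ring_scope.

Section Helpers.
Variables (R : realType) (D : finType) (d : D -> D -> R) (p : R).

Definition L1 (a b : {ffun D -> R}) : R := \sum_x `|a x - b x|.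

Lemma le_sum_term (T : finType) (F : T -> R) i :
  (forall j, 0 <= F j) -> F i <= \sum_j F j.
Proof. by move=> h; rewrite (bigD1 i) //= lerDl sumr_ge0. Qed.

Lemma prod_coupling (a b : {ffun D -> R}) :
  is_prob a -> is_prob b -> coupling a b [ffun z => a z.1 * b z.2].
Proof.
move=> [a0 a1] [b0 b1]; split.
- by move=> z; rewrite ffunE mulr_ge0.
- by move=> x; under eq_bigr do rewrite ffunE /=; rewrite -mulr_sumr b1 mulr1.
- by move=> y; under eq_bigr do rewrite ffunE /=; rewrite -mulr_suml a1 mul1r.
Qed.

Lemma cost_ge0 (pi : {ffun D * D -> R}) a b : coupling a b pi ->
  0 <= \sum_z (d z.1 z.2 `^ p) * pi z.
Proof. by move=> [h _ _]; apply: sumr_ge0 => z _; rewrite mulr_ge0 ?powR_ge0. Qed.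

Lemma Wpp_le a b pi : coupling a b pi ->
  Wpp d p a b <= \sum_z (d z.1 z.2 `^ p) * pi z.
Proof.
move=> hc; apply: ge_inf; last by exists pi.
by exists 0 => _ [pi' hpi' <-]; exact: cost_ge0 hpi'.
Qed.

Lemma Wpp_ge0 a b : is_prob a -> is_prob b -> 0 <= Wpp d p a b.
Proof.
move=> ha hb; apply: lb_le_inf.
  by eexists; exists [ffun z => a z.1 * b z.2]; first exact: prod_coupling.
by move=> _ [pi' hpi' <-]; exact: cost_ge0 hpi'.
Qed.

Lemma ctrans_le phi x y : ctrans d p phi x <= d x y `^ p - phi y.
Proof.
apply: ge_inf; last by exists y.
exists (- \sum_y `|d x y `^ p - phi y|) => _ [z _ <-].
have := @le_sum_term _ (fun y => `|d x y `^ p - phi y|) z (fun _ => normr_ge0 _).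
by rewrite ler_norml => /andP[].
Qed.

Lemma ctrans_osc M psi x x' : (forall x y, d x y `^ p <= M) ->
  ctrans d p psi x - M <= ctrans d p psi x'.
Proof.
move=> hM; apply: lb_le_inf; first by eexists; exists x.
move=> _ [y _ <-]; have := ctrans_le psi x y; have := hM x y.
have := powR_ge0 (d x' y) p; lra.
Qed.


Lemma dual_le_cost phi th nu pi : coupling th nu pi ->
  integ phi nu + integ (ctrans d p phi) th <= \sum_z (d z.1 z.2 `^ p) * pi z.
Proof.
move=> [h0 hr hc]; rewrite /integ.
have e1 : \sum_y phi y * nu y = \sum_x \sum_y phi y * pi (x, y).
  by rewrite exchange_big; apply: eq_bigr => y _; rewrite -hc mulr_sumr.
have e2 : \sum_x ctrans d p phi x * th x =
          \sum_x \sum_y ctrans d p phi x * pi (x, y).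
  by apply: eq_bigr => x _; rewrite -hr mulr_sumr.
rewrite e1 e2 -big_split /=.
under eq_bigr do rewrite -big_split /=.
rewrite pair_bigA /=; apply: ler_sum => -[x y] _ /=.
rewrite -mulrDl ler_wpM2r //; have := ctrans_le phi x y; lra.
Qed.

Lemma dual_le_Wpp phi th nu : is_prob th -> is_prob nu ->
  integ phi nu + integ (ctrans d p phi) th <= Wpp d p th nu.
Proof.
move=> ht hn; apply: lb_le_inf.
  by eexists; exists [ffun z => th z.1 * nu z.2]; first exact: prod_coupling.
by move=> _ [pi' hpi' <-]; exact: dual_le_cost.
Qed.

Lemma int_osc M psi a b (x0 : D) : (forall x y, d x y `^ p <= M) ->
  is_prob a -> is_prob b ->
  integ (ctrans d p psi) b - integ (ctrans d p psi) a <= M * L1 a b.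
Proof.
move=> hM [a0 a1] [b0 b1]; set phi := ctrans d p psi.
have -> : integ phi b - integ phi a =
          \sum_x (phi x - phi x0) * (b x - a x).
  under [RHS]eq_bigr do rewrite mulrBl.
  rewrite sumrB -mulr_sumr sumrB a1 b1 subrr mulr0 subr0 /integ -sumrB.
  by apply: eq_bigr => x _; rewrite mulrBr.
rewrite /L1 mulr_sumr; apply: ler_sum => x _.
apply: le_trans (ler_norm _) _; rewrite normrM distrC [`|b x - a x|]distrC.
apply: ler_wpM2r => //; rewrite ler_norml.
have := ctrans_osc M psi x x0 hM; have := ctrans_osc M psi x0 x hM.
rewrite -/phi; lra.
Qed.

Lemma L1_le_cost c a b pi :
  (forall z : D * D, z.1 != z.2 -> c <= d z.1 z.2 `^ p) -> 0 <= c ->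
  coupling a b pi -> c / 2 * L1 a b <= \sum_z (d z.1 z.2 `^ p) * pi z.
Proof.
move=> hcz c0 [h0 hr hc].
pose w (z : D * D) := (z.1 != z.2)%:R * pi z.
have w0 z : 0 <= w z by rewrite /w mulr_ge0.
have key : L1 a b <= 2 * \sum_z w z.
  have -> : \sum_z w z = \sum_x \sum_y w (x, y).
    by rewrite pair_bigA; apply: eq_bigr => -[].
  rewrite /L1.
  apply: (@le_trans _ _ (\sum_x \sum_y (w (x, y) + w (y, x)))).
    apply: ler_sum => x _; rewrite -(hr x) -(hc x) -sumrB.
    apply: le_trans (ler_norm_sum _ _ _) _; apply: ler_sum => y _.
    rewrite /w /=; case: (eqVneq x y) => [->|nxy]; first by rewrite subrr normr0 !mul0r addr0.
    rewrite /= ?mul1r; apply: le_trans (ler_normB _ _) _.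
    by rewrite !ger0_norm.
  under eq_bigr do rewrite big_split /=.
  rewrite big_split /= [X in _ + X <= _]exchange_big /=; lra.
have key2 : c * \sum_z w z <= \sum_z (d z.1 z.2 `^ p) * pi z.
  rewrite mulr_sumr; apply: ler_sum => z _; rewrite /w.
  case: (eqVneq z.1 z.2) => [e|ne]; first by rewrite mul0r mulr0 mulr_ge0 ?powR_ge0.
  by rewrite mul1r ler_wpM2r // hcz.
have := ler_wpM2l c0 key; nra.
Qed.

Lemma L1_le_Wpp c a b :
  (forall z : D * D, z.1 != z.2 -> c <= d z.1 z.2 `^ p) -> 0 <= c ->
  is_prob a -> is_prob b -> c / 2 * L1 a b <= Wpp d p a b.
Proof.
move=> hcz c0 ha hb; apply: lb_le_inf.
  by eexists; exists [ffun z => a z.1 * b z.2]; first exact: prod_coupling.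
by move=> _ [pi' hpi' <-]; exact: L1_le_cost hpi'.
Qed.

Lemma glue M th a b pi : 0 <= M -> (forall x y, d x y `^ p <= M) ->
  is_prob th -> is_prob a -> is_prob b -> coupling th b pi ->
  exists pi', coupling th a pi' /\
    \sum_z (d z.1 z.2 `^ p) * pi' z <= \sum_z (d z.1 z.2 `^ p) * pi z + M * L1 a b.
Proof.
move=> M0 hM [t0 t1] [a0 a1] [b0 b1] [h0 hr hc].
pose m y := Num.min (a y) (b y).
pose f y := m y / b y.
have m0 y : 0 <= m y by rewrite /m le_min a0 b0.
have ma y : m y <= a y by rewrite /m ge_min lexx.
have f0 y : 0 <= f y by rewrite /f divr_ge0.
have f1 y : f y <= 1.
  rewrite /f; have [->|bn] := eqVneq (b y) 0; first by rewrite invr0 mulr0.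
  rewrite ler_pdivrMr ?mul1r ?lt_def ?bn ?b0 //.
  by rewrite /m ge_min lexx orbT.
pose pi1 (z : D * D) := pi z * f z.2.
have c1 y : \sum_x pi1 (x, y) = m y.
  rewrite /pi1 /= -mulr_suml hc /f.
  have [b0y|bn] := eqVneq (b y) 0.
    by rewrite b0y mul0r; apply/eqP; rewrite eq_le (m0 y) /m ge_min b0y lexx orbT.
  by rewrite mulrC divfK.
pose r x := \sum_y pi1 (x, y).
have rt x : r x <= th x.
  by rewrite /r -hr; apply: ler_sum => y _; rewrite /pi1 ler_piMr.
pose s := \sum_y (a y - m y).
have s0 : 0 <= s by apply: sumr_ge0 => y _; rewrite subr_ge0.
have F3 : \sum_x (th x - r x) = s.
  rewrite sumrB t1 /r exchange_big /=; under eq_bigr do rewrite c1.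
  by rewrite /s sumrB a1.
pose pi2 (z : D * D) := (th z.1 - r z.1) * (a z.2 - m z.2) / s.
have p20 z : 0 <= pi2 z.
  by rewrite /pi2 !mulr_ge0 ?invr_ge0 ?subr_ge0.
exists [ffun z => pi1 z + pi2 z]; split; first split.
- by move=> z; rewrite ffunE addr_ge0 // /pi1 mulr_ge0.
- move=> x; under eq_bigr do rewrite ffunE.
  rewrite big_split /= -/(r x) /pi2 /=.
  under eq_bigr do rewrite -mulrA.
  rewrite -mulr_sumr -mulr_suml -/s.
  have [s00|sn] := eqVneq s 0.
    have tz : th x - r x = 0.
      have h := (psumr_eq0P (P := fun _ => true) (F := fun i => th i - r i)).
      apply: (h _ _ x isT).
        by move=> i _; rewrite subr_ge0 rt.
      by rewrite F3 s00.
    have e : th x = r x by apply/eqP; rewrite -subr_eq0; apply/eqP.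
    by rewrite e subrr mul0r addr0.
  by rewrite mulfV // mulr1 addrC subrK.
- move=> y; under eq_bigr do rewrite ffunE.
  rewrite big_split /= c1 /pi2 /=.
  rewrite -mulr_suml -mulr_suml F3.
  have [s00|sn] := eqVneq s 0.
    have az : a y - m y = 0.
      have h := (psumr_eq0P (P := fun _ => true) (F := fun i => a i - m i)).
      apply: (h _ s00 y isT).
      by move=> i _; rewrite subr_ge0 ma.
    have e : a y = m y by apply/eqP; rewrite -subr_eq0; apply/eqP.
    by rewrite e subrr !(mulr0, mul0r) addr0.
  by rewrite mulrAC mulfV // mul1r addrC subrK.
under eq_bigr do rewrite ffunE mulrDr.
rewrite big_split /=; apply: lerD.
  apply: ler_sum => z _; apply: ler_wpM2l; first exact: powR_ge0.
  by rewrite /pi1 ler_piMr.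
apply: (@le_trans _ _ (\sum_z M * pi2 z)).
  by apply: ler_sum => z _; rewrite ler_wpM2r.
rewrite -mulr_sumr; apply: ler_wpM2l => //.
have -> : \sum_z pi2 z = s * s / s.
  have -> : \sum_z pi2 z = \sum_x \sum_y pi2 (x, y).
    by rewrite pair_bigA; apply: eq_bigr => -[].
  rewrite /pi2 /=.
  under eq_bigr do rewrite -mulr_suml -mulr_sumr -/s.
  by rewrite -!mulr_suml F3.
have sL : s <= L1 a b.
  apply: ler_sum => y _; rewrite /m.
  case: (leP (a y) (b y)) => h; first by rewrite subrr normr_ge0.
  exact: ler_norm.
have [->|sn] := eqVneq s 0; first by rewrite !mul0r; apply: sumr_ge0.
by rewrite mulfK.
Qed.

Lemma Wpp_lip M th a b : 0 <= M -> (forall x y, d x y `^ p <= M) ->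
  is_prob th -> is_prob a -> is_prob b ->
  Wpp d p th a <= Wpp d p th b + M * L1 a b.
Proof.
move=> M0 hM ht ha hb; apply/ler_addgt0Pr => e e0.
have hinf : has_inf [set (\sum_z (d z.1 z.2 `^ p) * pi z) | pi in coupling th b].
  split; first by eexists; exists [ffun z => th z.1 * b z.2]; first exact: prod_coupling.
  by exists 0 => _ [pi' hpi' <-]; exact: cost_ge0 hpi'.
have [_ [pi hpi <-] hs] := inf_adherent e0 hinf.
have [pi' [hc' hcost]] := glue M th a b pi M0 hM ht ha hb hpi.
apply: le_trans (Wpp_le _ _ _ hc') _; rewrite /Wpp in hs; lra.
Qed.

End Helpers.
Arguments L1 {R D}.

Lemma le_bigmax_seq (R : realType) (s : seq nat) (F : nat -> R) i k :
  (k \in s)%N -> F k <= \big[Num.max/i]_(j <- s) F j.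
Proof.
elim: s => [//|a s IH]; rewrite big_cons in_cons => /orP[/eqP->|/IH h].
  by rewrite le_max lexx.
by rewrite le_max h orbT.
Qed.

Lemma bigmax_le_seq (R : realType) (s : seq nat) (F : nat -> R) i B :
  i <= B -> (forall k, F k <= B) -> \big[Num.max/i]_(j <- s) F j <= B.
Proof.
move=> hi hF; elim: s => [|a s IH]; first by rewrite big_nil.
by rewrite big_cons ge_max hF IH.
Qed.

Lemma trunc_close (R : realType) (N : nat) (u v : R) :
  0 <= u <= 1 -> 0 <= v <= 1 ->
  (inord (Num.trunc (N%:R * u)) : 'I_N.+1) = inord (Num.trunc (N%:R * v)) ->
  `|u - v| * N%:R <= 1.
Proof.
move=> /andP[u0 u1] /andP[v0 v1] e.
have hu : (Num.trunc (N%:R * u) <= N)%N.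
  rewrite truncn_le_nat; apply: (@le_lt_trans _ _ (N%:R)); last by rewrite ltr_nat.
  by rewrite ler_piMr.
have hv : (Num.trunc (N%:R * v) <= N)%N.
  rewrite truncn_le_nat; apply: (@le_lt_trans _ _ (N%:R)); last by rewrite ltr_nat.
  by rewrite ler_piMr.
have := f_equal val e; rewrite /= !inordK ?ltnS // => et.
have := truncn_itv (mulr_ge0 (ler0n _ N) u0).
have := truncn_itv (mulr_ge0 (ler0n _ N) v0).
rewrite et -natr1 => /andP[h1 h2] /andP[h3 h4].
rewrite -[N%:R]ger0_norm // -normrM ler_norml mulrBl.
apply/andP; split; lra.
Qed.

Theorem theoremB6 (R : realType) (D : finType) (d : D -> D -> R) (p : R)
  (theta : {ffun D -> R}) (mu : nat -> {ffun D -> R})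
  (phi psi : nat -> D -> R) :
  is_metric d -> 1 < p -> is_prob theta ->
  (forall k, is_prob (mu k)) ->
  (forall nu : {ffun D -> R}, is_prob nu ->
     forall e : R, 0 < e -> exists k, Wp d p nu (mu k) < e) ->
  (forall k, psi k = ctrans d p (phi k)) ->
  (forall k, phi k = ctrans d p (psi k)) ->
  (forall k, Wpp d p theta (mu k) = integ (phi k) (mu k) + integ (psi k) theta) ->
  forall eps : R, 0 < eps ->
  exists I : seq nat, I != [::] /\
    forall nu : {ffun D -> R}, is_prob nu ->
      `| Wpp d p theta nu - GI phi psi theta I nu | <= eps.
Proof.
move=> [d0 d_eq d_sym d_tri] p1 ht hmu hdense hpsi hphi hW eps eps0.
have [x0 _ | hD0] := pickP (@predT D); last first.
  exfalso; move: ht => [_]; rewrite big1 // => [/eqP|x _]; first by rewrite eq_sym oner_eq0.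
  by have := hD0 x.
pose M := \sum_(z : D * D) d z.1 z.2 `^ p.
have hM x y : d x y `^ p <= M.
  exact: (@le_sum_term R _ (fun z : D * D => d z.1 z.2 `^ p) (x, y) (fun _ => powR_ge0 _ _)).
have M0 : 0 <= M by apply: sumr_ge0 => z _; exact: powR_ge0.
pose S := \sum_(z : D * D | z.1 != z.2) (d z.1 z.2 `^ p)^-1.
have S0 : 0 <= S by apply: sumr_ge0 => z _; rewrite invr_ge0 powR_ge0.
pose c := (1 + S)^-1.
have c0 : 0 < c by rewrite invr_gt0; lra.
have hcz : forall z : D * D, z.1 != z.2 -> c <= d z.1 z.2 `^ p.
  move=> z nz.
  have dz : 0 < d z.1 z.2 `^ p.
    apply: powR_gt0; rewrite lt_def d0 andbT; apply/eqP => /d_eq h.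
    by rewrite h eqxx in nz.
  have hS : (d z.1 z.2 `^ p)^-1 <= S.
    rewrite /S (bigD1 z) //= lerDl; apply: sumr_ge0 => w _; rewrite invr_ge0 powR_ge0 //.
  rewrite /c -[X in _ <= X]invrK lef_pV2 ?posrE ?invr_gt0 //; lra.
pose eta := eps / (4 * (M + 1)).
have eta0 : 0 < eta by rewrite /eta divr_gt0 //; lra.
have heta : eta * (4 * (M + 1)) = eps by rewrite /eta divfK //; apply/eqP => h; lra.
pose N := (Num.trunc (4 * (M + 1) * #|D|%:R / eps)).+1.
have hN : #|D|%:R <= N%:R * eta.
  have hx : 0 <= 4 * (M + 1) * #|D|%:R / eps.
    by rewrite divr_ge0 ?mulr_ge0 ?ler0n //; [lra | exact: ltW].
  have /andP[_] := truncn_itv hx.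
  rewrite -/N ltr_pdivrMr // -heta => h.
  nra.
pose pat (nu : {ffun D -> R}) : {ffun D -> 'I_N.+1} :=
  [ffun x => inord (Num.trunc (N%:R * nu x))].
pose Q (f : {ffun D -> 'I_N.+1}) k :=
  exists nu', is_prob nu' /\ pat nu' = f /\ L1 nu' (mu k) < eta.
pose kf f := match pselect (exists k, Q f k) with
             | left h => projT1 (cid h) | right _ => 0%N end.
have kfQ f : (exists k, Q f k) -> Q f (kf f).
  by move=> h; rewrite /kf; case: pselect => [h'|//]; exact: projT2 (cid h').
pose Is := [seq kf f | f <- enum {ffun D -> 'I_N.+1}].
have hin f : kf f \in Is by apply: map_f; rewrite mem_enum.
exists Is; split.
  by apply/negP => /eqP e; have := hin [ffun=> ord0]; rewrite e.
move=> nu hnu.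
pose v k := integ (phi k) nu + integ (psi k) theta.
have vle k : v k <= Wpp d p theta nu.
  by rewrite /v hpsi; exact: (@dual_le_Wpp R D d p (phi k) theta nu ht hnu).
have GIle : GI phi psi theta Is nu <= Wpp d p theta nu.
  by rewrite /GI /=; apply: bigmax_le_seq; [exact: vle | exact: vle].
have p01 (a : {ffun D -> R}) x : is_prob a -> 0 <= a x <= 1.
  move=> [a0 a1]; rewrite a0 /= -a1.
  exact: (@le_sum_term R D (fun y => a y) x a0).
pose w := c / 2 * eta.
have w0 : 0 < w by rewrite /w mulr_gt0 // divr_gt0.
have [k hk] := hdense nu hnu (w `^ p^-1) (powR_gt0 _ w0).
have hWk : Wpp d p nu (mu k) < w.
  rewrite ltNge; apply/negP => hge.
  have r0 : 0 <= p^-1 by rewrite invr_ge0; lra.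
  have xin : w \in Num.nneg by rewrite nnegrE ltW.
  have yin : Wpp d p nu (mu k) \in Num.nneg by rewrite nnegrE; exact: (@Wpp_ge0 R D d p nu (mu k) hnu (hmu k)).
  have := ge0_ler_powR r0 xin yin hge.
  by rewrite /Wp in hk; rewrite leNgt hk.
have hL : L1 nu (mu k) < eta.
  have c2 : 0 < c / 2 by rewrite divr_gt0.
  rewrite -(ltr_pM2l c2); apply: le_lt_trans hWk.
  exact: (@L1_le_Wpp R D d p c nu (mu k) hcz (ltW c0) hnu (hmu k)).
have [nu' [hnu' [hpat hL']]] :=
  kfQ (pat nu) (ex_intro _ k (ex_intro _ nu (conj hnu (conj erefl hL)))).
set k' := kf (pat nu) in hL' *.
have hclose : L1 nu nu' * N%:R <= #|D|%:R.
  rewrite /L1 mulr_suml.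
  apply: le_trans (ler_sum (G := fun _ => 1) _ _) _.
    move=> x _; apply: trunc_close; [exact: p01 | exact: p01 |].
    by have := f_equal (fun g : {ffun D -> 'I_N.+1} => g x) (esym hpat); rewrite !ffunE.
  by rewrite sumr_const.
have hNN : 0 < N%:R :> R by rewrite ltr0n.
have hL1 : L1 nu nu' <= eta.
  by rewrite -(ler_pM2r hNN); apply: le_trans hclose _; rewrite mulrC.
have hL2 : L1 nu (mu k') <= 2 * eta.
  have : L1 nu (mu k') <= L1 nu nu' + L1 nu' (mu k').
    by rewrite /L1 -big_split; apply: ler_sum => x _; exact: ler_distD.
  lra.
have h1 := @Wpp_lip R D d p M theta nu (mu k') M0 hM ht hnu (hmu k').
rewrite hW in h1.
have h2 := @int_osc R D d p M (psi k') nu (mu k') x0 hM hnu (hmu k').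
rewrite -hphi in h2.
have h3 : v k' <= GI phi psi theta Is nu.
  by rewrite /GI /=; apply: le_bigmax_seq; exact: hin.
rewrite ger0_norm ?subr_ge0 //.
have hML := ler_wpM2l M0 hL2.
move: h3; rewrite /v => h3.
nra.
Qed.
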